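(* Fix $\mu\in\mathbb{C}$. Two rational functions $r_1(z),r_2(z)\in\mathbb{C}(z)^\times$ yield isomorphic $\mathfrak{sl}(2)$-modules $(\mathbb{C}(z),\rho^{(\mu)}_{r_1})\cong(\mathbb{C}(z),\rho^{(\mu)}_{r_2})$ if and only if there exist $\alpha_1,\dots,\alpha_n\in\mathbb{C}$ and $a_1,\dots,a_n\in\mathbb{Z}$ such that $$\frac{r_2(z)}{r_1(z)}=\prod_{i=1}^n\frac{z-\alpha_i}{z+a_i-\alpha_i}.$$
   Context: $\mathfrak{sl}(2)$ has basis $L_{-1}=f$, $L_0=-\tfrac12 h$, $L_1=-e$ for a Chevalley basis $e,f,h$ ($[e,f]=h$, $[h,e]=2e$, $[h,f]=-2f$). Let $\nabla$ be the $\mathbb{C}$-linear automorphism of $\mathbb{C}(z)$ given by $\nabla(g)(z)=g(z+1)$, and $\pi_\mu(z)=z(z-1)-\mu$. For $r(z)\in\mathbb{C}(z)^\times$, $\rho^{(\mu)}_r$ is the $\mathfrak{sl}(2)$-representation on the one-dimensional $\mathbb{C}(z)$-vector space $\mathbb{C}(z)$ given by $\rho^{(\mu)}_r(L_{-1})=\frac{\pi_\mu(z)}{r(z-1)}\circ\nabla^{-1}$, $\rho^{(\mu)}_r(L_0)=$ multiplication by $z$, $\rho^{(\mu)}_r(L_1)=r(z)\circ\nabla$ (a Casimir module of level $\mu$). *)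

(* Defs.v *)
From HB Require Import structures.
From mathcomp Require Import all_boot all_order all_algebra.
From mathcomp Require Import complex.
From mathcomp Require Import reals.
Set Implicit Arguments. Unset Strict Implicit. Unset Printing Implicit Defensive.
Import Order.TTheory GRing.Theory Num.Theory.
Local Open Scope ring_scope.

Definition Cz (R : realType) := {fraction {poly R[i]}}.

Definition shiftz (R : realType) (c : R[i]) (f : Cz R) : Cz R :=
  let x := repr f in
  (tofrac ((x.1 : {poly R[i]}) \Po ('X + c%:P))) / tofrac ((x.2 : {poly R[i]}) \Po ('X + c%:P)).

Definition nabla (R : realType) (f : Cz R) : Cz R := shiftz 1 f.
Definition nabla_inv (R : realType) (f : Cz R) : Cz R := shiftz (-1) f.

Definition cstz (R : realType) (c : R[i]) : Cz R := tofrac (c%:P).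
Definition zz (R : realType) : Cz R := tofrac 'X.

Definition pi_mu (R : realType) (mu : R[i]) : Cz R := zz R * (zz R - 1) - cstz mu.

Definition rho_Lm1 (R : realType) (mu : R[i]) (r : Cz R) (f : Cz R) : Cz R :=
  pi_mu mu / nabla_inv r * nabla_inv f.
Definition rho_L0 (R : realType) (f : Cz R) : Cz R := zz R * f.
Definition rho_L1 (R : realType) (r : Cz R) (f : Cz R) : Cz R := r * nabla f.

(* An isomorphism of sl(2)-modules (C(z), rho_{r1}) -> (C(z), rho_{r2}):
   a C-linear bijection intertwining the actions of the basis L_{-1}, L_0, L_1
   (hence of all of sl(2), by linearity). *)
Definition sl2_iso (R : realType) (mu : R[i]) (r1 r2 : Cz R) (phi : Cz R -> Cz R) : Prop :=
  [/\ (forall f g, phi (f + g) = phi f + phi g),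
      (forall (c : R[i]) f, phi (cstz c * f) = cstz c * phi f) &
      bijective phi] /\
  [/\ (forall f, phi (rho_Lm1 mu r1 f) = rho_Lm1 mu r2 (phi f)),
      (forall f, phi (rho_L0 f) = rho_L0 (phi f)) &
      (forall f, phi (rho_L1 r1 f) = rho_L1 r2 (phi f))].

Definition sl2_isomorphic (R : realType) (mu : R[i]) (r1 r2 : Cz R) : Prop :=
  exists phi : Cz R -> Cz R, sl2_iso mu r1 r2 phi.

(* Main.v *)
Require Import Defs.
From HB Require Import structures.
From mathcomp Require Import all_boot all_order all_algebra.
From mathcomp Require Import complex.
From mathcomp Require Import reals.
From mathcomp Require Import ring.
Import Order.TTheory GRing.Theory Num.Theory.
Local Open Scope ring_scope. Local Open Scope quotient_scope.
Set Implicit Arguments. Unset Strict Implicit. Unset Printing Implicit Defensive.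

Lemma pi_numden (R : idomainType) (x : {ratio R}) :
  (\pi_({fraction R}) x) * tofrac \d_x = tofrac \n_x.
Proof.
unlock tofrac.
rewrite -[_ * _]FracField.pi_mul.
apply/eqmodP; rewrite /= FracField.equivfE /FracField.mulf /=.
rewrite !numden_Ratio ?oner_neq0 ?mulf_neq0 ?oner_neq0 ?denom_ratioP //.
by rewrite !mulr1 mulrC.
Qed.

Lemma frac_repr (R : idomainType) (f : {fraction R}) :
  f = tofrac (repr f).1 / tofrac (repr f).2.
Proof.
rewrite -{1}[f]reprK -(@pi_numden _ (repr f)) mulfK //.
by rewrite tofrac_eq0 denom_ratioP.
Qed.

Section Shift.
Variable R : realType.
Local Notation C := (R[i]).
Local Notation F := (Cz R).
Implicit Types (f g : F) (a b p q : {poly C}) (c d : C).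

Definition sig (c : C) (p : {poly C}) := p \Po ('X + c%:P).

Lemma sig_eq0 c p : (sig c p == 0) = (p == 0).
Proof. by rewrite /sig comp_poly2_eq0 // size_XaddC. Qed.

Lemma sigM c p q : sig c (p * q) = sig c p * sig c q.
Proof. by rewrite /sig comp_polyM. Qed.

Lemma sigD c p q : sig c (p + q) = sig c p + sig c q.
Proof. by rewrite /sig comp_polyD. Qed.

Lemma sigC c (a : C) : sig c a%:P = a%:P.
Proof. by rewrite /sig comp_polyC. Qed.

Lemma sigX c : sig c 'X = 'X + c%:P.
Proof. by rewrite /sig comp_polyX. Qed.

Lemma sig_sig c d p : sig d (sig c p) = sig (c + d) p.
Proof.
rewrite /sig -comp_polyA comp_polyD comp_polyX comp_polyC.
by rewrite -addrA -polyCD (addrC d).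
Qed.

Lemma sig0 p : sig 0 p = p.
Proof. by rewrite /sig addr0 comp_polyXr. Qed.

Lemma shiftzE c (a b : {poly C}) : b != 0 ->
  shiftz c (tofrac a / tofrac b) = tofrac (sig c a) / tofrac (sig c b).
Proof.
move=> b0.
rewrite /shiftz -/(sig c _) -/(sig c _).
set f := tofrac a / tofrac b.
have := frac_repr f.
move: (repr f) => x; rewrite /f => e.
have x2 : x.2 != 0 by apply: denom_ratioP.
have tb : tofrac b != 0 :> F by rewrite tofrac_eq0.
have tx : tofrac x.2 != 0 :> F by rewrite tofrac_eq0.
have e2 : x.1 * b = a * x.2.
  apply/eqP; rewrite -tofrac_eq !tofracM.
  by move/eqP: e; rewrite (eqr_div _ _ tb tx) eq_sym.
have s2 : tofrac (sig c x.2) != 0 :> F by rewrite tofrac_eq0 sig_eq0.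
have sb : tofrac (sig c b) != 0 :> F by rewrite tofrac_eq0 sig_eq0.
apply/eqP; rewrite (eqr_div _ _ s2 sb) -!tofracM -!sigM e2.
exact: eqxx.
Qed.

Lemma frac_ex (f : F) : exists a b, b != 0 /\ f = tofrac a / tofrac b.
Proof.
exists (repr f).1, (repr f).2; split; first exact: denom_ratioP.
exact: frac_repr.
Qed.

Lemma shiftz_tofrac c p : shiftz c (tofrac p) = tofrac (sig c p).
Proof.
have := shiftzE c p (oner_neq0 _).
by rewrite sigC polyC1 tofrac1 !divr1.
Qed.

Lemma shiftzM c f g : shiftz c (f * g) = shiftz c f * shiftz c g.
Proof.
have [a [b [b0 ->]]] := frac_ex f.
have [a' [b' [b0' ->]]] := frac_ex g.
rewrite mulf_div -!tofracM !shiftzE ?mulf_neq0 // !sigM !tofracM.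
by rewrite mulf_div.
Qed.

Lemma shiftzD c f g : shiftz c (f + g) = shiftz c f + shiftz c g.
Proof.
have [a [b [b0 ->]]] := frac_ex f.
have [a' [b' [b0' ->]]] := frac_ex g.
have tb : tofrac b != 0 :> F by rewrite tofrac_eq0.
have tb' : tofrac b' != 0 :> F by rewrite tofrac_eq0.
have sb : tofrac (sig c b) != 0 :> F by rewrite tofrac_eq0 sig_eq0.
have sb' : tofrac (sig c b') != 0 :> F by rewrite tofrac_eq0 sig_eq0.
rewrite (addf_div _ _ tb tb') -!tofracM -tofracD !shiftzE ?mulf_neq0 //.
by rewrite (addf_div _ _ sb sb') sigD !sigM !tofracM tofracD !tofracM.
Qed.

Lemma shiftz0f c : shiftz c 0 = 0.
Proof. by rewrite -tofrac0 shiftz_tofrac /sig comp_poly0 tofrac0. Qed.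

Lemma shiftz_cst c (a : C) : shiftz c (cstz a) = cstz a.
Proof. by rewrite /cstz shiftz_tofrac sigC. Qed.

Lemma shiftz_zz c : shiftz c (zz R) = zz R + cstz c.
Proof. by rewrite /zz /cstz shiftz_tofrac sigX tofracD. Qed.

Lemma shiftzV c f : shiftz c (f^-1) = (shiftz c f)^-1.
Proof.
have [a [b [b0 ->]]] := frac_ex f.
have [->|a0] := eqVneq a 0.
  by rewrite tofrac0 mul0r invr0 shiftz0f invr0.
by rewrite invf_div !shiftzE // invf_div.
Qed.

Lemma shiftz_shiftz c d f : shiftz d (shiftz c f) = shiftz (c + d) f.
Proof.
have [a [b [b0 ->]]] := frac_ex f.
by rewrite !shiftzE ?sig_eq0 // !sig_sig.
Qed.

Lemma shiftz_id f : shiftz 0 f = f.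
Proof.
have [a [b [b0 ->]]] := frac_ex f.
by rewrite !shiftzE // !sig0.
Qed.

Lemma nabla_invK f : nabla_inv (nabla f) = f.
Proof. by rewrite /nabla /nabla_inv shiftz_shiftz subrr shiftz_id. Qed.


Lemma sigB c p q : sig c (p - q) = sig c p - sig c q.
Proof. by rewrite /sig comp_polyB. Qed.

Lemma cstzD (x y : C) : cstz (x + y) = cstz x + cstz y :> F.
Proof. by rewrite /cstz polyCD tofracD. Qed.
Lemma cstzN (x : C) : cstz (- x) = - cstz x :> F.
Proof. by rewrite /cstz polyCN tofracN. Qed.
Lemma cstzB (x y : C) : cstz (x - y) = cstz x - cstz y :> F.
Proof. by rewrite cstzD cstzN. Qed.
Lemma cstz1 : cstz 1 = 1 :> F.
Proof. by rewrite /cstz polyC1 tofrac1. Qed.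

Lemma zzC_neq0 (x : C) : zz R + cstz x != 0.
Proof.
rewrite /zz /cstz -tofracD tofrac_eq0 -(opprK x) polyCN.
by rewrite polyXsubC_eq0.
Qed.

Lemma nablaM f g : nabla (f * g) = nabla f * nabla g.
Proof. exact: shiftzM. Qed.
Lemma nablaV f : nabla (f^-1) = (nabla f)^-1.
Proof. exact: shiftzV. Qed.
Lemma nabla1 : nabla 1 = 1 :> F.
Proof. by rewrite /nabla -tofrac1 shiftz_tofrac -polyC1 sigC. Qed.
Lemma nabla_invM f g : nabla_inv (f * g) = nabla_inv f * nabla_inv g.
Proof. exact: shiftzM. Qed.
Lemma nabla_invD f g : nabla_inv (f + g) = nabla_inv f + nabla_inv g.
Proof. exact: shiftzD. Qed.
Lemma nabla_invV f : nabla_inv (f^-1) = (nabla_inv f)^-1.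
Proof. exact: shiftzV. Qed.
Lemma nablaD f g : nabla (f + g) = nabla f + nabla g.
Proof. exact: shiftzD. Qed.

Definition gen (al : C) (a : int) : F :=
  (zz R - cstz al) / (zz R + cstz (a%:~R - al)).

Definition PF (f : F) := exists (n : nat) (alpha : 'I_n -> C) (a : 'I_n -> int),
  f = \prod_(k < n) gen (alpha k) (a k).

Lemma gen_inv al (a : int) : (gen al a)^-1 = gen (al - a%:~R) (- a).
Proof.
rewrite /gen invf_div intrN; congr (_ / _).
  by rewrite !cstzB ?cstzN; ring.
by rewrite !cstzB ?cstzN; ring.
Qed.

Lemma PF1 : PF 1.
Proof. by exists 0%N, (fun _ => 0), (fun _ => 0); rewrite big_ord0. Qed.

Lemma PF_gen al (a : int) : PF (gen al a).
Proof. by exists 1%N, (fun _ => al), (fun _ => a); rewrite big_ord1. Qed.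

Lemma PFM f g : PF f -> PF g -> PF (f * g).
Proof.
move=> [n1 [al1 [a1 ->]]] [n2 [al2 [a2 ->]]].
exists (n1 + n2)%N.
exists (fun k => match split k with inl i => al1 i | inr j => al2 j end).
exists (fun k => match split k with inl i => a1 i | inr j => a2 j end).
rewrite big_split_ord; congr (_ * _); apply: eq_bigr => i _.
  by rewrite -/(unsplit (inl i)) unsplitK.
by rewrite -/(unsplit (inr i)) unsplitK.
Qed.

Lemma PFV f : PF f -> PF (f^-1).
Proof.
move=> [n [al [a ->]]].
exists n, (fun k => al k - (a k)%:~R), (fun k => - a k).
by rewrite -prodfV; apply: eq_bigr => i _; rewrite gen_inv.
Qed.

Lemma PF_ratio_n n p : (size p <= n)%N -> p != 0 ->
  PF (tofrac p / tofrac (sig 1 p)).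
Proof.
elim: n p => [|n IH] p.
  by rewrite leqn0 size_poly_eq0 => /eqP ->; rewrite eqxx.
move=> sp p0.
have [/eqP/size_poly1P [c c0 ->]|s1] := eqVneq (size p) 1%N.
  rewrite sigC divff ?tofrac_eq0 ?polyC_eq0 //; exact: PF1.
have [be rb] := closed_rootP p s1.
have [q eq] := factor_theorem p be rb.
have q0 : q != 0 by move: p0; rewrite eq; apply: contraNneq => ->; rewrite mul0r.
have sq : (size q <= n)%N.
  move: sp; rewrite eq size_mul ?polyXsubC_eq0 // size_XsubC addn2 /=.
  by [].
rewrite eq sigM !tofracM -mulf_div; apply: PFM; first exact: IH.
suff -> : tofrac ('X - be%:P) / tofrac (sig 1 ('X - be%:P)) = gen be 1 by apply: PF_gen.
rewrite /gen sigB sigX sigC !tofracB tofracD mulr1z cstzB.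
by rewrite /zz /cstz; congr (_ / _); ring.
Qed.

Lemma PF_nabla g : g != 0 -> PF (g / nabla g).
Proof.
have [p [q [q0 ->]]] := frac_ex g.
have [->|p0] := eqVneq p 0; first by rewrite tofrac0 mul0r eqxx.
move=> _.
rewrite /nabla shiftzE //.
have -> : tofrac p / tofrac q / (tofrac (sig 1 p) / tofrac (sig 1 q)) =
   (tofrac p / tofrac (sig 1 p)) * (tofrac q / tofrac (sig 1 q))^-1 :> F.
  by rewrite invf_div mulf_div invf_div mulf_div (mulrC (tofrac q)).
apply: PFM; first exact: (PF_ratio_n (leqnn _) p0).
exact/PFV/(PF_ratio_n (leqnn _) q0).
Qed.


Lemma nablaK f : nabla (nabla_inv f) = f.
Proof. by rewrite /nabla /nabla_inv shiftz_shiftz addNr shiftz_id. Qed.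

Lemma nabla_eq0 f : (nabla f == 0) = (f == 0).
Proof.
apply/eqP/eqP => [e|->]; last by rewrite /nabla shiftz0f.
by rewrite -(nabla_invK f) e /nabla_inv shiftz0f.
Qed.

Lemma nabla_inv_eq0 f : (nabla_inv f == 0) = (f == 0).
Proof.
apply/eqP/eqP => [e|->]; last by rewrite /nabla_inv shiftz0f.
by rewrite -(nablaK f) e /nabla shiftz0f.
Qed.

Definition Q (f : F) := exists h, h != 0 /\ f = h / nabla h.

Lemma Q1 : Q 1.
Proof. by exists 1; split; [exact: oner_neq0 | rewrite nabla1 divr1]. Qed.

Lemma QM f g : Q f -> Q g -> Q (f * g).
Proof.
move=> [h1 [h10 ->]] [h2 [h20 ->]]; exists (h1 * h2); split.
  by rewrite mulf_neq0.
by rewrite nablaM mulf_div.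
Qed.

Lemma QV f : Q f -> Q (f^-1).
Proof.
move=> [h [h0 ->]]; exists h^-1; split; first by rewrite invr_eq0.
by rewrite nablaV invf_div invrK [RHS]mulrC.
Qed.

Lemma tele (A B D : F) : B != 0 -> A / B * (B / D) = A / D.
Proof. by move=> B0; rewrite mulrA divfK. Qed.

Lemma Q_gen1 al : Q (gen al 1).
Proof.
exists (zz R - cstz al); split; first by rewrite -cstzN zzC_neq0.
rewrite /gen -cstzN nablaD /nabla shiftz_zz shiftz_cst mulr1z.
by rewrite cstzB -addrA cstzN.
Qed.

Lemma Q_gen_nat al (n : nat) : Q (gen al n%:Z).
Proof.
elim: n al => [|n IH] al.
  have -> : gen al 0 = 1.
    rewrite /gen mulr0z sub0r cstzN divff //.
    by rewrite -cstzN zzC_neq0.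
  exact: Q1.
have -> : gen al n.+1%:Z = gen al n%:Z * gen (al - (n%:Z)%:~R) 1.
  rewrite /gen -(tele _ _ (zzC_neq0 ((n%:Z)%:~R - al))).
  congr (_ * (_ / _)).
    by rewrite !cstzB; ring.
  by rewrite -!pmulrn mulrS !cstzB cstzD; ring.
by apply: QM; [apply: IH | apply: Q_gen1].
Qed.

Lemma Q_gen_nat1 al : Q (gen al 1).
Proof. exact: (Q_gen_nat al 1). Qed.

Lemma Q_gen al (a : int) : Q (gen al a).
Proof.
case: a => n; first exact: Q_gen_nat.
have := gen_inv (al + (n.+1%:Z)%:~R) (n.+1%:Z).
rewrite addrK -NegzE => <-.
exact/QV/Q_gen_nat.
Qed.

Lemma PF_Q f : PF f -> Q f.
Proof.
move=> [n [al [a ->]]].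
apply: (big_ind Q Q1 QM) => i _; exact: Q_gen.
Qed.

End Shift.

Theorem theorem9p1 (R : realType) (mu : R[i]) (r1 r2 : Cz R) :
  r1 != 0 -> r2 != 0 ->
  (sl2_isomorphic mu r1 r2 <->
   exists (n : nat) (alpha : 'I_n -> R[i]) (a : 'I_n -> int),
     r2 / r1 = \prod_(k < n) ((zz R - cstz (alpha k)) / (zz R + cstz ((a k)%:~R - alpha k)))).
Proof.
move=> r10 r20; split.
  move=> [phi [[add lin [psi K1 K2]] [Lm1 L0 L1]]].
  have phi0 : phi 0 = 0.
    have := lin 0 0; rewrite /cstz polyC0 tofrac0 !mul0r; exact.
  have plin : forall p f, phi (tofrac p * f) = tofrac p * phi f.
    move=> p; elim/poly_ind: p => [|p c IH] f.
      by rewrite tofrac0 !mul0r phi0.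
    rewrite tofracD tofracM !mulrDl add lin -mulrA -/(zz R) IH.
    have := L0 f; rewrite /rho_L0 => ->.
    by rewrite -/(cstz c) (mulrA (tofrac p)).
  have phiE : forall f, phi f = f * phi 1.
    move=> f; have [a [b [b0 ->]]] := frac_ex f.
    have tb : tofrac b != 0 :> Cz R by rewrite tofrac_eq0.
    apply: (mulfI tb); rewrite -plin mulrCA divff // mulr1.
    by rewrite -[tofrac a]mulr1 plin mulr1 mulrA mulrCA divff // mulr1.
  set g := phi 1.
  have g0 : g != 0.
    apply/eqP => g0.
    have : psi (phi 1) = psi (phi 0) by rewrite -/g g0 phi0.
    by rewrite !K1 => /eqP; rewrite oner_eq0.
  have ng0 : nabla g != 0 by rewrite nabla_eq0.
  have := L1 1; rewrite /rho_L1 nabla1 mulr1 phiE -/g => e.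
  have -> : r2 / r1 = g / nabla g.
    by apply/eqP; rewrite (eqr_div _ _ r10 ng0) -e mulrC.
  exact: PF_nabla.
move=> [n [al [a e]]].
have [h [h0 eh]] : Q (r2 / r1) by apply: PF_Q; exists n, al, a.
have nh0 : nabla h != 0 by rewrite nabla_eq0.
have e2 : r2 * nabla h = h * r1.
  by apply/eqP; rewrite -(eqr_div _ _ r10 nh0) eh.
exists (fun f => f * h); split; first split.
- by move=> f g; rewrite mulrDl.
- by move=> c f; rewrite mulrA.
- by exists (fun f => f / h) => f; [exact: (mulfK h0) | exact: (divfK h0)].
split.
- move=> f; rewrite /rho_Lm1 nabla_invM.
  have A10 : nabla_inv r1 != 0 by rewrite nabla_inv_eq0.
  have A20 : nabla_inv r2 != 0 by rewrite nabla_inv_eq0.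
  have e3 : nabla_inv r2 * h = nabla_inv h * nabla_inv r1.
    by rewrite -[h in LHS]nabla_invK -nabla_invM e2 nabla_invM.
  have key : h / nabla_inv r1 = nabla_inv h / nabla_inv r2.
    by apply/eqP; rewrite (eqr_div _ _ A10 A20) mulrC e3.
  transitivity (pi_mu mu * nabla_inv f * (h / nabla_inv r1)); first by ring.
  by rewrite key; ring.
- by move=> f; rewrite /rho_L0 mulrA.
- by move=> f; rewrite /rho_L1 nablaM [RHS]mulrCA e2; ring.
Qed.
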